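(* Let $f_j(x,t)$ ($0\le j\le n+1$), $\psi_l(x,t)$, $\varphi_m(x,t)$ ($0\le l,m\le n$) be a compatible local solution of the two autonomous systems of ODEs (in $t$ and in $x$) described in the context, where the functions $a,b,c,d$ appearing in them are given by $$a=\frac{\psi_n}{f_{n+1}},\qquad b=-\frac{\varphi_n}{f_{n+1}},\qquad c=2i\left(\frac{\psi_nf_n}{f^2_{n+1}}-\frac{\psi_{n-1}}{f_{n+1}}\right),\qquad d=2i\left(\frac{\varphi_nf_n}{f^2_{n+1}}-\frac{\varphi_{n-1}}{f_{n+1}}\right).$$ Then the functions $a(x,t)$ and $b(x,t)$ are a local, infinitely differentiable in $x$ and $t$, solution of the nonlinear system $$i\dot a+a''+2a^2b=0,\qquad i\dot b-b''-2b^2a=0,$$ where the dot denotes $\partial/\partial t$ and the prime denotes $\partial/\partial x$.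
   Context: Fix $n\in\mathbb{N}$. One seeks polynomial-in-$z$ solutions $f(x,t,z)=\sum_{j=0}^{n+1}f_j(x,t)z^j$, $\psi(x,t,z)=\sum_{j=0}^{n}\psi_j(x,t)z^j$, $\varphi(x,t,z)=\sum_{j=0}^{n}\varphi_j(x,t)z^j$ of the linear systems $\dot f=(d+2izb)\psi-(c-2iza)\varphi$, $\dot\psi=-2(c-2iza)f-2i(2z^2-ab)\psi$, $\dot\varphi=2(d+2izb)f+2i(2z^2-ab)\varphi$, and $f'=ib\psi+ia\varphi$, $\psi'=2iaf-2iz\psi$, $\varphi'=2ibf+2iz\varphi$, with dot $=\partial_t$ and prime $=\partial_x$. In terms of coefficients (with the convention $f_j,\psi_l,\varphi_m=0$ for negative indices and for $j>n+1$, $l,m>n$) these become the $t$-system $\dot f_j=d\psi_j-c\varphi_j+2ib\psi_{j-1}+2ia\varphi_{j-1}$ ($0\le j\le n+1$), $\dot\psi_l=-2cf_l+4iaf_{l-1}+2iab\psi_l-4i\psi_{l-2}$ ($0\le l\le n$), $\dot\varphi_m=2df_m+4ibf_{m-1}-2iab\varphi_m+4i\varphi_{m-2}$ ($0\le m\le n$), and the $x$-system $f_j'=ib\psi_j+ia\varphi_j$ ($0\le j\le n+1$), $\psi_l'=2iaf_l-2i\psi_{l-1}$ ($0\le l\le n$), $\varphi_m'=2ibf_m+2i\varphi_{m-1}$ ($0\le m\le n$). Requiring polynomial solutions forces $a,b,c,d$ to be given by the formulas in the claim; substituting them, both systems become closed autonomous ODE systems in the $N+1=3n+2$ unknowns $(f_0,\dots,f_{n+1},\psi_0,\dots,\psi_n,\varphi_0,\dots,\varphi_n)$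 with polynomial right-hand sides. The two systems satisfy the Frobenius compatibility conditions, so they admit a common (compatible) local solution. A consequence of the systems is that $f_{n+1}$ is constant in $x$ and $t$. *)

(* Defs.v *)
From Stdlib Require Import Reals List.
From Coquelicot Require Import Coquelicot.
Open Scope R_scope.
Open Scope list_scope.

(* Direction of a partial derivative: Px = d/dx (prime), Pt = d/dt (dot). *)
Inductive dir : Type := Px | Pt.

Definition is_partial (d : dir) (F : R -> R -> C) (x t : R) (l : C) : Prop :=
  match d with
  | Px => is_derive (fun s => F s t) x l
  | Pt => is_derive (fun s => F x s) t l
  end.

Definition open2 (U : R -> R -> Prop) : Prop :=
  forall x t, U x t -> exists eps : R, 0 < eps /\
    forall x' t', Rabs (x' - x) < eps -> Rabs (t' - t) < eps -> U x' t'.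

(* [smooth_family U F D] : D ds is the iterated partial derivative of F
   along the list of directions ds (the head of the list is applied last),
   and all of these exist on U.  Hence F is infinitely differentiable in x
   and t on U (all mixed partial derivatives of all orders exist). *)
Definition smooth_family (U : R -> R -> Prop) (F : R -> R -> C)
    (D : list dir -> R -> R -> C) : Prop :=
  (forall x t, U x t -> D nil x t = F x t) /\
  (forall ds d x t, U x t -> is_partial d (D ds) x t (D (d :: ds) x t)).

(* Truncated coefficient access: [coef N g j k x t] is g_{j-k}(x,t) if
   0 <= j-k <= N, and 0 otherwise (convention for negative / too large indices). *)
Definition coef (N : nat) (g : nat -> R -> R -> C) (j k : nat) (x t : R) : C :=
  if andb (Nat.leb k j) (Nat.leb (j - k) N) then g (j - k)%nat x t else RtoC 0.

Open Scope C_scope.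

Definition coef_a (n : nat) (f psi : nat -> R -> R -> C) (x t : R) : C :=
  coef n psi n 0 x t / f (S n) x t.
Definition coef_b (n : nat) (f phi : nat -> R -> R -> C) (x t : R) : C :=
  - (coef n phi n 0 x t / f (S n) x t).
Definition coef_c (n : nat) (f psi : nat -> R -> R -> C) (x t : R) : C :=
  2 * Ci * (coef n psi n 0 x t * f n x t / (f (S n) x t * f (S n) x t)
            - coef n psi n 1 x t / f (S n) x t).
Definition coef_d (n : nat) (f phi : nat -> R -> R -> C) (x t : R) : C :=
  2 * Ci * (coef n phi n 0 x t * f n x t / (f (S n) x t * f (S n) x t)
            - coef n phi n 1 x t / f (S n) x t).

Definition t_system (n : nat) (f psi phi : nat -> R -> R -> C) (x t : R) : Prop :=
  let a := coef_a n f psi x t in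
  let b := coef_b n f phi x t in
  let c := coef_c n f psi x t in
  let d := coef_d n f phi x t in
  (forall j, (j <= S n)%nat ->
     is_partial Pt (f j) x t
       (d * coef n psi j 0 x t - c * coef n phi j 0 x t
        + 2 * Ci * b * coef n psi j 1 x t + 2 * Ci * a * coef n phi j 1 x t)) /\
  (forall l, (l <= n)%nat ->
     is_partial Pt (psi l) x t
       (- 2 * c * coef (S n) f l 0 x t + 4 * Ci * a * coef (S n) f l 1 x t
        + 2 * Ci * a * b * coef n psi l 0 x t - 4 * Ci * coef n psi l 2 x t)) /\
  (forall m, (m <= n)%nat ->
     is_partial Pt (phi m) x t
       (2 * d * coef (S n) f m 0 x t + 4 * Ci * b * coef (S n) f m 1 x t
        - 2 * Ci * a * b * coef n phi m 0 x t + 4 * Ci * coef n phi m 2 x t)).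

Definition x_system (n : nat) (f psi phi : nat -> R -> R -> C) (x t : R) : Prop :=
  let a := coef_a n f psi x t in
  let b := coef_b n f phi x t in
  (forall j, (j <= S n)%nat ->
     is_partial Px (f j) x t
       (Ci * b * coef n psi j 0 x t + Ci * a * coef n phi j 0 x t)) /\
  (forall l, (l <= n)%nat ->
     is_partial Px (psi l) x t
       (2 * Ci * a * coef (S n) f l 0 x t - 2 * Ci * coef n psi l 1 x t)) /\
  (forall m, (m <= n)%nat ->
     is_partial Px (phi m) x t
       (2 * Ci * b * coef (S n) f m 0 x t + 2 * Ci * coef n phi m 1 x t)).

(* Main.v *)
Require Import Defs.
From Stdlib Require Import Reals List.
From Coquelicot Require Import Coquelicot.
From Stdlib Require Import Lra Psatz Arith Lia.
Open Scope list_scope.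
Open Scope C_scope.
Lemma dext (f g : R -> R) x l : (forall s, f s = g s) -> derivable_pt_lim f x l -> derivable_pt_lim g x l.
Proof. intros E H. apply is_derive_Reals. apply is_derive_Reals in H. eapply is_derive_ext; eauto. Qed.

Lemma dfst (f : R -> C) x l : is_derive f x l -> is_derive (fun s => fst (f s)) x (fst l).
Proof.
intros H. unfold is_derive in *. eapply filterdiff_ext_lin.
apply (filterdiff_comp' f fst). exact H.
apply filterdiff_linear. apply is_linear_fst.
intros y; reflexivity.
Qed.
Lemma dsnd (f : R -> C) x l : is_derive f x l -> is_derive (fun s => snd (f s)) x (snd l).
Proof.
intros H. unfold is_derive in *. eapply filterdiff_ext_lin.
apply (filterdiff_comp' f snd). exact H.
apply filterdiff_linear. apply is_linear_snd.
intros y; reflexivity.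
Qed.
Lemma dpair (u v: R -> R) x du dv : is_derive u x du -> is_derive v x dv -> is_derive (fun s => (u s, v s) : C) x ((du, dv):C).
Proof.
intros Hu Hv.
assert (H := is_derive_plus _ _ _ _ _ (is_derive_scal_l (V:=C_R_NormedModule) u x du (1,0)%R Hu) (is_derive_scal_l (V:=C_R_NormedModule) v x dv (0,1)%R Hv)).
eapply is_derive_ext; [|replace ((du,dv):C) with (plus (scal du ((1,0)%R:C)) (scal dv ((0,1)%R:C)))].
2: exact H.
all: intros; simpl; unfold plus, scal; simpl; unfold prod_plus, prod_scal, plus, scal; simpl;
 f_equal; unfold mult; simpl; ring.
Qed.
Lemma dsplit (f : R -> C) x l :
  derivable_pt_lim (fun s => fst (f s)) x (fst l) ->
  derivable_pt_lim (fun s => snd (f s)) x (snd l) -> is_derive f x l.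
Proof.
intros H1 H2. apply is_derive_Reals in H1. apply is_derive_Reals in H2.
destruct l as [l1 l2].
eapply is_derive_ext; [|apply (dpair _ _ _ _ _ H1 H2)].
intros s; simpl. destruct (f s); reflexivity.
Qed.
Lemma dfstR (f : R -> C) x l : is_derive f x l -> derivable_pt_lim (fun s => fst (f s)) x (fst l).
Proof. intros; apply is_derive_Reals, dfst; auto. Qed.
Lemma dsndR (f : R -> C) x l : is_derive f x l -> derivable_pt_lim (fun s => snd (f s)) x (snd l).
Proof. intros; apply is_derive_Reals, dsnd; auto. Qed.

Lemma Cd_mult (f g : R -> C) x df dg : is_derive f x df -> is_derive g x dg ->
  is_derive (fun s => (f s * g s)%C) x (df * g x + f x * dg)%C.
Proof.
intros Hf Hg.
apply dfstR in Hf as Hf1. apply dsndR in Hf as Hf2.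
apply dfstR in Hg as Hg1. apply dsndR in Hg as Hg2.
apply dsplit.
- assert (D1 := derivable_pt_lim_minus _ _ _ _ _ (derivable_pt_lim_mult _ _ _ _ _ Hf1 Hg1) (derivable_pt_lim_mult _ _ _ _ _ Hf2 Hg2)).
  match goal with |- derivable_pt_lim _ _ ?L => replace L with ((fst df * fst (g x) + fst (f x) * fst dg) -
       (snd df * snd (g x) + snd (f x) * snd dg))%R by (simpl; ring) end.
  exact D1.
- assert (D1 := derivable_pt_lim_plus _ _ _ _ _ (derivable_pt_lim_mult _ _ _ _ _ Hf1 Hg2) (derivable_pt_lim_mult _ _ _ _ _ Hf2 Hg1)).
  match goal with |- derivable_pt_lim _ _ ?L => replace L with ((fst df * snd (g x) + fst (f x) * snd dg) +
       (snd df * fst (g x) + snd (f x) * fst dg))%R by (simpl; ring) end.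
  exact D1.
Qed.

Lemma Cd_plus (f g : R -> C) x df dg : is_derive f x df -> is_derive g x dg ->
  is_derive (fun s => (f s + g s)%C) x (df + dg)%C.
Proof.
intros Hf Hg.
apply dfstR in Hf as Hf1. apply dsndR in Hf as Hf2.
apply dfstR in Hg as Hg1. apply dsndR in Hg as Hg2.
apply dsplit.
- exact (derivable_pt_lim_plus _ _ _ _ _ Hf1 Hg1).
- exact (derivable_pt_lim_plus _ _ _ _ _ Hf2 Hg2).
Qed.

Lemma Cd_opp (f : R -> C) x df : is_derive f x df ->
  is_derive (fun s => (- f s)%C) x (- df)%C.
Proof.
intros Hf.
apply dfstR in Hf as Hf1. apply dsndR in Hf as Hf2.
apply dsplit.
- exact (derivable_pt_lim_opp _ _ _ Hf1).
- exact (derivable_pt_lim_opp _ _ _ Hf2).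
Qed.

Lemma Cd_const (c : C) x : is_derive (fun _ : R => c) x (RtoC 0).
Proof.
apply dsplit; simpl; apply derivable_pt_lim_const.
Qed.

Lemma Cd_inv (f : R -> C) x df : is_derive f x df -> f x <> RtoC 0 ->
  is_derive (fun s => (/ f s)%C) x (- (/ f x * / f x) * df)%C.
Proof.
intros Hf Hnz.
apply dfstR in Hf as Hf1. apply dsndR in Hf as Hf2.
assert (Hw : (fst (f x) ^ 2 + snd (f x) ^ 2 <> 0)%R).
{ intro E. apply Hnz. destruct (f x) as [p q]; simpl in E.
  assert (p = 0 /\ q = 0)%R as [-> ->] by (split; nra). reflexivity. }
assert (DW : derivable_pt_lim (fun s => fst (f s) ^ 2 + snd (f s) ^ 2)%R x
   (2 * fst (f x) * fst df + 2 * snd (f x) * snd df)%R).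
{ assert (D := derivable_pt_lim_plus _ _ _ _ _ (derivable_pt_lim_mult _ _ _ _ _ Hf1 Hf1) (derivable_pt_lim_mult _ _ _ _ _ Hf2 Hf2)).
  replace (2 * fst (f x) * fst df + 2 * snd (f x) * snd df)%R with
    ((fst df * fst (f x) + fst (f x) * fst df) + (snd df * snd (f x) + snd (f x) * snd df))%R by ring.
  eapply dext; [|exact D]. intros s; cbv [plus_fct mult_fct]; ring. }
apply dsplit.
- assert (D := derivable_pt_lim_div _ _ _ _ _ Hf1 DW Hw).
  match goal with |- derivable_pt_lim _ _ ?L => replace L with
    ((fst df * (fst (f x) ^ 2 + snd (f x) ^ 2) - (2 * fst (f x) * fst df + 2 * snd (f x) * snd df) * fst (f x)) /
      (fst (f x) ^ 2 + snd (f x) ^ 2)²)%R end.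
  exact D.
  clear -Hw; cbv beta; revert Hw; generalize (f x) df; intros [p q] [dp dq] Hw; simpl in *. unfold Rsqr. field. intro E; apply Hw; nra.
- assert (D := derivable_pt_lim_div _ _ _ _ _ (derivable_pt_lim_opp _ _ _ Hf2) DW Hw).
  match goal with |- derivable_pt_lim _ _ ?L => replace L with
    ((- snd df * (fst (f x) ^ 2 + snd (f x) ^ 2) - (2 * fst (f x) * fst df + 2 * snd (f x) * snd df) * (- snd (f x))) /
      (fst (f x) ^ 2 + snd (f x) ^ 2)²)%R end.
  eapply dext; [|exact D]. intros s; simpl. unfold Rdiv. reflexivity.
  clear -Hw; cbv beta; revert Hw; generalize (f x) df; intros [p q] [dp dq] Hw; simpl in *. unfold Rsqr. field. intro E; apply Hw; nra.
Qed.

Inductive ex : Type :=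
 | EP (k : nat) | EQ (k : nat) | EF (k : nat) | EFF | EI | Ec (c : C)
 | Eadd (e1 e2 : ex) | Emul (e1 e2 : ex) | Eopp (e : ex).

Fixpoint ev (n : nat) (f psi phi : nat -> R -> R -> C) (e : ex) (x t : R) : C :=
  match e with
  | EP k => coef n psi n k x t
  | EQ k => coef n phi n k x t
  | EF k => coef (S n) f n k x t
  | EFF => f (S n) x t
  | EI => / f (S n) x t
  | Ec c => c
  | Eadd e1 e2 => ev n f psi phi e1 x t + ev n f psi phi e2 x t
  | Emul e1 e2 => ev n f psi phi e1 x t * ev n f psi phi e2 x t
  | Eopp e => - ev n f psi phi e x t
  end.

Definition ae := Emul (EP 0) EI.
Definition be := Eopp (Emul (EQ 0) EI).
Definition ce := Emul (Ec (2*Ci)) (Eadd (Emul (Emul (EP 0) (EF 0)) (Emul EI EI)) (Eopp (Emul (EP 1) EI))).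
Definition de := Emul (Ec (2*Ci)) (Eadd (Emul (Emul (EQ 0) (EF 0)) (Emul EI EI)) (Eopp (Emul (EQ 1) EI))).
Definition c2i := Ec (2*Ci).
Definition c4i := Ec (4*Ci).

Definition datom (d : dir) (e : ex) : ex :=
  match d, e with
  | Px, EP k => Eadd (Emul (Emul c2i ae) (EF k)) (Eopp (Emul c2i (EP (S k))))
  | Px, EQ k => Eadd (Emul (Emul c2i be) (EF k)) (Emul c2i (EQ (S k)))
  | Px, EF k => Eadd (Emul (Emul (Ec Ci) be) (EP k)) (Emul (Emul (Ec Ci) ae) (EQ k))
  | Px, _ => Ec 0
  | Pt, EP k => Eadd (Eadd (Eadd (Emul (Emul (Ec (-2)) ce) (EF k)) (Emul (Emul c4i ae) (EF (S k))))
                  (Emul (Emul (Emul c2i ae) be) (EP k))) (Eopp (Emul c4i (EP (S (S k)))))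
  | Pt, EQ k => Eadd (Eadd (Eadd (Emul (Emul (Ec 2) de) (EF k)) (Emul (Emul c4i be) (EF (S k))))
                  (Eopp (Emul (Emul (Emul c2i ae) be) (EQ k)))) (Emul c4i (EQ (S (S k))))
  | Pt, EF k => Eadd (Eadd (Eadd (Emul de (EP k)) (Eopp (Emul ce (EQ k))))
                  (Emul (Emul c2i be) (EP (S k)))) (Emul (Emul c2i ae) (EQ (S k)))
  | Pt, _ => Eadd (Emul (Emul c2i be) (EP 0)) (Emul (Emul c2i ae) (EQ 0))
  end.

Fixpoint dex (d : dir) (e : ex) : ex :=
  match e with
  | EP _ | EQ _ | EF _ | EFF => datom d e
  | EI => Emul (Eopp (Emul EI EI)) (datom d EFF)
  | Ec _ => Ec 0
  | Eadd e1 e2 => Eadd (dex d e1) (dex d e2)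
  | Emul e1 e2 => Eadd (Emul (dex d e1) e2) (Emul e1 (dex d e2))
  | Eopp e => Eopp (dex d e)
  end.

Fixpoint dl (ds : list dir) (e : ex) : ex :=
  match ds with nil => e | d :: ds' => dex d (dl ds' e) end.

Section Main.
Variables (n : nat) (U : R -> R -> Prop) (f psi phi : nat -> R -> R -> C).
Hypothesis HF : forall x t, U x t -> f (S n) x t <> 0.
Hypothesis Ht : forall x t, U x t -> t_system n f psi phi x t.
Hypothesis Hx : forall x t, U x t -> x_system n f psi phi x t.

Local Notation EV := (ev n f psi phi).

Lemma final_identity x t : U x t ->
  let a := coef_a n f psi in let b := coef_b n f phi in
  Ci * EV (dex Pt ae) x t + EV (dex Px (dex Px ae)) x t + 2 * (a x t * a x t) * b x t = 0 /\
  Ci * EV (dex Pt be) x t - EV (dex Px (dex Px be)) x t - 2 * (b x t * b x t) * a x t = 0.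
Proof.
intros HU a b. subst a b. assert (Hi : Ci * Ci = -1) by (apply injective_projections; simpl; ring).
specialize (HF x t HU).
cbn [ev dex datom ae be ce de c2i c4i]. unfold coef_a, coef_b.
split; field [Hi]; auto.
Qed.

Lemma coef_in N (g : nat -> R -> R -> C) i k x t : (k <= i)%nat -> (i - k <= N)%nat -> coef N g i k x t = g (i-k)%nat x t.
Proof. intros H1 H2. unfold coef. rewrite (proj2 (Nat.leb_le _ _) H1), (proj2 (Nat.leb_le _ _) H2). reflexivity. Qed.
Lemma coef_out1 N (g : nat -> R -> R -> C) i k x t : (i < k)%nat -> coef N g i k x t = 0.
Proof. intros H1. unfold coef. rewrite (proj2 (Nat.leb_gt _ _) H1). reflexivity. Qed.
Lemma coef_out2 N (g : nat -> R -> R -> C) i k x t : (N < i - k)%nat -> coef N g i k x t = 0.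
Proof. intros H1. unfold coef. rewrite (proj2 (Nat.leb_gt _ _) H1). rewrite Bool.andb_false_r. reflexivity. Qed.
Lemma coef_shift N (g : nat -> R -> R -> C) i k m x t : (k <= i)%nat -> coef N g (i-k) m x t = coef N g i (k+m) x t.
Proof.
intros H. unfold coef. replace (i-k-m)%nat with (i-(k+m))%nat by lia.
destruct (Nat.leb_spec m (i-k)), (Nat.leb_spec (k+m) i); try lia; reflexivity.
Qed.
Lemma ide2 (F G : R -> C) x (l1 l2 : C) : (forall s, F s = G s) -> l1 = l2 -> is_derive F x l1 -> is_derive G x l2.
Proof. intros E1 E2 H. subst l2. eapply is_derive_ext; eauto. Qed.

Lemma F0eq x t : coef (S n) f n 0 x t = f n x t.
Proof. rewrite coef_in by lia. rewrite Nat.sub_0_r. reflexivity. Qed.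

Ltac valeq HU := let H := fresh in assert (H := HF _ _ HU);
  cbn [ev datom ae be ce de c2i c4i]; unfold coef_a, coef_b, coef_c, coef_d; rewrite ?F0eq; field; auto.

Lemma dP x t k : U x t -> forall d, is_partial d (EV (EP k)) x t (EV (datom d (EP k)) x t).
Proof.
intros HU d. destruct (Hx x t HU) as [_ [Hpx _]]. destruct (Ht x t HU) as [_ [Hpt _]].
destruct (le_lt_dec k n) as [Hk|Hk]; destruct d; simpl.
- specialize (Hpx (n-k)%nat ltac:(lia)). simpl in Hpx.
  rewrite (coef_shift (S n) f n k 0), (coef_shift n psi n k 1), Nat.add_0_r, Nat.add_1_r in Hpx by lia.
  eapply ide2; [| | exact Hpx]. intros s; symmetry; apply coef_in; lia. valeq HU.
- specialize (Hpt (n-k)%nat ltac:(lia)). simpl in Hpt.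
  rewrite (coef_shift (S n) f n k 0), (coef_shift (S n) f n k 1), (coef_shift n psi n k 0), (coef_shift n psi n k 2), Nat.add_0_r, Nat.add_1_r in Hpt by lia.
  replace (k+2)%nat with (S (S k)) in Hpt by lia.
  eapply ide2; [| | exact Hpt]. intros s; symmetry; apply coef_in; lia. valeq HU.
- eapply ide2; [| | apply (Cd_const 0 x)]. intros s; symmetry; apply coef_out1; lia.
  rewrite (coef_out1 (S n) f n k), (coef_out1 n psi n (S k)) by lia. valeq HU.
- eapply ide2; [| | apply (Cd_const 0 t)]. intros s; symmetry; apply coef_out1; lia.
  rewrite (coef_out1 (S n) f n k), (coef_out1 (S n) f n (S k)), (coef_out1 n psi n k), (coef_out1 n psi n (S (S k))) by lia. valeq HU.
Qed.

Lemma dQ x t k : U x t -> forall d, is_partial d (EV (EQ k)) x t (EV (datom d (EQ k)) x t).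
Proof.
intros HU d. destruct (Hx x t HU) as [_ [_ Hpx]]. destruct (Ht x t HU) as [_ [_ Hpt]].
destruct (le_lt_dec k n) as [Hk|Hk]; destruct d; simpl.
- specialize (Hpx (n-k)%nat ltac:(lia)). simpl in Hpx.
  rewrite (coef_shift (S n) f n k 0), (coef_shift n phi n k 1), Nat.add_0_r, Nat.add_1_r in Hpx by lia.
  eapply ide2; [| | exact Hpx]. intros s; symmetry; apply coef_in; lia. valeq HU.
- specialize (Hpt (n-k)%nat ltac:(lia)). simpl in Hpt.
  rewrite (coef_shift (S n) f n k 0), (coef_shift (S n) f n k 1), (coef_shift n phi n k 0), (coef_shift n phi n k 2), Nat.add_0_r, Nat.add_1_r in Hpt by lia.
  replace (k+2)%nat with (S (S k)) in Hpt by lia.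
  eapply ide2; [| | exact Hpt]. intros s; symmetry; apply coef_in; lia. valeq HU.
- eapply ide2; [| | apply (Cd_const 0 x)]. intros s; symmetry; apply coef_out1; lia.
  rewrite (coef_out1 (S n) f n k), (coef_out1 n phi n (S k)) by lia. valeq HU.
- eapply ide2; [| | apply (Cd_const 0 t)]. intros s; symmetry; apply coef_out1; lia.
  rewrite (coef_out1 (S n) f n k), (coef_out1 (S n) f n (S k)), (coef_out1 n phi n k), (coef_out1 n phi n (S (S k))) by lia. valeq HU.
Qed.

Lemma dF x t k : U x t -> forall d, is_partial d (EV (EF k)) x t (EV (datom d (EF k)) x t).
Proof.
intros HU d. destruct (Hx x t HU) as [Hpx _]. destruct (Ht x t HU) as [Hpt _].
destruct (le_lt_dec k n) as [Hk|Hk]; destruct d; simpl.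
- specialize (Hpx (n-k)%nat ltac:(lia)). simpl in Hpx.
  rewrite (coef_shift n psi n k 0), (coef_shift n phi n k 0), Nat.add_0_r in Hpx by lia.
  eapply ide2; [| | exact Hpx]. intros s; symmetry; apply coef_in; lia. valeq HU.
- specialize (Hpt (n-k)%nat ltac:(lia)). simpl in Hpt.
  rewrite (coef_shift n psi n k 0), (coef_shift n psi n k 1), (coef_shift n phi n k 0), (coef_shift n phi n k 1), Nat.add_0_r, Nat.add_1_r in Hpt by lia.
  eapply ide2; [| | exact Hpt]. intros s; symmetry; apply coef_in; lia. valeq HU.
- eapply ide2; [| | apply (Cd_const 0 x)]. intros s; symmetry; apply coef_out1; lia.
  rewrite (coef_out1 n psi n k), (coef_out1 n phi n k) by lia. valeq HU.
- eapply ide2; [| | apply (Cd_const 0 t)]. intros s; symmetry; apply coef_out1; lia.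
  rewrite (coef_out1 n psi n k), (coef_out1 n psi n (S k)), (coef_out1 n phi n k), (coef_out1 n phi n (S k)) by lia. valeq HU.
Qed.

Lemma dFF x t : U x t -> forall d, is_partial d (EV EFF) x t (EV (datom d EFF) x t).
Proof.
intros HU d. destruct (Hx x t HU) as [Hpx _]. destruct (Ht x t HU) as [Hpt _].
destruct d; simpl.
- specialize (Hpx (S n) ltac:(lia)). simpl in Hpx.
  rewrite (coef_out2 n psi (S n) 0), (coef_out2 n phi (S n) 0) in Hpx by lia.
  eapply ide2; [| | exact Hpx]. reflexivity. valeq HU.
- specialize (Hpt (S n) ltac:(lia)). simpl in Hpt.
  rewrite (coef_out2 n psi (S n) 0), (coef_out2 n phi (S n) 0) in Hpt by lia.
  change (coef n psi (S n) 1 x t) with (coef n psi n 0 x t) in Hpt.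
  change (coef n phi (S n) 1 x t) with (coef n phi n 0 x t) in Hpt.
  eapply ide2; [| | exact Hpt]. reflexivity. valeq HU.
Qed.

Lemma main_deriv d e x t : U x t -> is_partial d (EV e) x t (EV (dex d e) x t).
Proof.
intros HU. induction e.
- apply dP; auto.
- apply dQ; auto.
- apply dF; auto.
- apply dFF; auto.
- assert (H := dFF x t HU d). assert (Hnz := HF x t HU).
  destruct d; [exact (Cd_inv (fun s => f (S n) s t) x _ H Hnz) | exact (Cd_inv (fun s => f (S n) x s) t _ H Hnz)].
- destruct d; [exact (Cd_const c x) | exact (Cd_const c t)].
- destruct d; [exact (Cd_plus (fun s => EV e1 s t) (fun s => EV e2 s t) x _ _ IHe1 IHe2)
              | exact (Cd_plus (fun s => EV e1 x s) (fun s => EV e2 x s) t _ _ IHe1 IHe2)].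
- destruct d; [exact (Cd_mult (fun s => EV e1 s t) (fun s => EV e2 s t) x _ _ IHe1 IHe2)
              | exact (Cd_mult (fun s => EV e1 x s) (fun s => EV e2 x s) t _ _ IHe1 IHe2)].
- destruct d; [exact (Cd_opp (fun s => EV e s t) x _ IHe)
              | exact (Cd_opp (fun s => EV e x s) t _ IHe)].
Qed.
End Main.

Theorem theorem1 (n : nat) (U : R -> R -> Prop) (f psi phi : nat -> R -> R -> C) :
  open2 U ->
  (forall x t, U x t -> f (S n) x t <> 0) ->
  (forall x t, U x t -> t_system n f psi phi x t) ->
  (forall x t, U x t -> x_system n f psi phi x t) ->
  let a := coef_a n f psi in
  let b := coef_b n f phi in
  exists Da Db : list dir -> R -> R -> C,
    smooth_family U a Da /\ smooth_family U b Db /\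
    (forall x t, U x t ->
       Ci * Da (Pt :: nil) x t + Da (Px :: Px :: nil) x t
         + 2 * (a x t * a x t) * b x t = 0 /\
       Ci * Db (Pt :: nil) x t - Db (Px :: Px :: nil) x t
         - 2 * (b x t * b x t) * a x t = 0).
Proof.
intros _ HF Ht Hx a b.
exists (fun ds => ev n f psi phi (dl ds ae)), (fun ds => ev n f psi phi (dl ds be)).
split; [|split].
- split. intros; reflexivity.
  intros ds d x t HU. exact (main_deriv n U f psi phi HF Ht Hx d (dl ds ae) x t HU).
- split. intros; reflexivity.
  intros ds d x t HU. exact (main_deriv n U f psi phi HF Ht Hx d (dl ds be) x t HU).
- intros x t HU. exact (final_identity n U f psi phi HF x t HU).
Qed.
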